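(* Let $t\geq 1$ be an integer, $m=8t+4$ and $n=2^m+1$, and let $x$ be an odd integer. Then: (1) if $1\leq x\leq 2^{4t+2}-1$, $x$ is a coset leader; (2) if $2^{4t+2}+3\leq x\leq 2^{4t+3}-5$, $x$ is a coset leader; (3) if $2^{4t+3}+5\leq x\leq 2^{4t+3}+2^{4t+1}-3$, $x$ is a coset leader; (4) if $2^{4t+3}+2^{4t+1}+3\leq x\leq 2^{4t+3}+2^{4t+2}-3$, $x$ is a coset leader; (5) if $2^{4t+3}+2^{4t+2}+5\leq x\leq 2^{4t+3}+2^{4t+2}+2^{4t+1}-3$, $x$ is a coset leader; (6) if $x=2^{4t+2}+1$, or $2^{4t+3}-3\leq x\leq 2^{4t+3}+3$, or $2^{4t+3}+2^{4t+1}-1\leq x\leq 2^{4t+3}+2^{4t+1}+1$, or $2^{4t+3}+2^{4t+2}-1\leq x\leq 2^{4t+3}+2^{4t+2}+3$, or $2^{4t+3}+2^{4t+2}+2^{4t+1}-1\leq x\leq 2^{4t+3}+2^{4t+2}+2^{4t+1}+1$, then $x$ is not a coset leader.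
   Context: For $n=2^m+1$ and an integer $x$, the 2-cyclotomic coset of $x$ modulo $n$ is $C_x=\{x\cdot 2^{j} \bmod n : j\geq 0\}\subseteq\{0,1,\dots,n-1\}$. For $0\leq x\leq n-1$, ''$x$ is a coset leader'' means that $x$ is the smallest element of $C_x$. *)

(* Defs.v *)
From mathcomp Require Import all_boot.
Set Implicit Arguments. Unset Strict Implicit. Unset Printing Implicit Defensive.

Definition in_coset (n x y : nat) : Prop := exists j : nat, y = (x * 2 ^ j) %% n.

(* For 0 <= x <= n-1: x is a coset leader iff x is the smallest element of C_x.
   (x itself belongs to C_x via j = 0 since x < n.) *)
Definition coset_leader (n x : nat) : Prop :=
  x < n /\ forall y, in_coset n x y -> x <= y.

(* Main.v *)
Require Import Defs.
From mathcomp Require Import all_boot zify.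

Definition Pn n x i := x <= x * 2 ^ i %% n /\ x * 2 ^ i %% n + x <= n.

Lemma modE1 A Q n v : A = Q * n + v -> v < n -> A %% n = v.
Proof. by move=> -> hv; rewrite modnMDl modn_small. Qed.

Lemma modE2 A Q n v : A + v = Q * n -> 0 < v -> v < n -> A %% n = n - v.
Proof.
move=> h hv hvn; apply: (@modE1 _ Q.-1); last by lia.
case: Q h => [|Q] h /=; first by lia.
rewrite mulSn in h; nia.
Qed.

Lemma shift N A : 0 < A %% (N + 1) -> (A * N) %% (N + 1) = N + 1 - A %% (N + 1).
Proof.
move=> hr.
have hA := divn_eq A (N + 1).
have hlt : A %% (N + 1) < N + 1 by rewrite ltn_mod addn1.
move: hr hlt hA; set r := A %% (N + 1); set Q := A %/ (N + 1).
case: r => [|r] // _ hlt hA.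
apply: (@modE1 _ (Q * N + r)); last by lia.
rewrite hA; nia.
Qed.

Lemma P_shift m x j : 0 < x -> Pn (2 ^ m + 1) x j -> Pn (2 ^ m + 1) x (j + m).
Proof.
move=> hx [h1 h2]; rewrite /Pn expnD mulnA shift; last by lia.
lia.
Qed.

Lemma leader_of m x : 0 < x -> x < 2 ^ m + 1 -> 0 < m ->
  (forall i, i < m -> Pn (2 ^ m + 1) x i) -> coset_leader (2 ^ m + 1) x.
Proof.
move=> hx hxn hm H; split=> // y [j ->].
suff : Pn (2 ^ m + 1) x j by case.
elim/ltn_ind: j => j IH.
case: (ltnP j m) => hj; first exact: H.
have -> : j = (j - m) + m by lia.
apply: P_shift => //; apply: IH; lia.
Qed.

Lemma P_eq1 n x i Q v : x * 2 ^ i = Q * n + v -> x <= v -> v + x <= n -> 0 < x -> Pn n x i.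
Proof. move=> h h1 h2 hx; rewrite /Pn (@modE1 _ _ _ _ h); lia. Qed.

Lemma P_eq2 n x i Q v : x * 2 ^ i + v = Q * n -> x <= v -> v + x <= n -> 0 < x -> Pn n x i.
Proof. move=> h h1 h2 hx; rewrite /Pn (@modE2 _ _ _ _ h); lia. Qed.

Lemma notL1 n x i Q v : x * 2 ^ i = Q * n + v -> v < x -> ~ coset_leader n x.
Proof.
move=> h hv [hxn H].
have := H (x * 2 ^ i %% n) (ex_intro _ i erefl).
rewrite (@modE1 _ _ _ _ h); lia.
Qed.

Lemma notL2 m x i Q v : x * 2 ^ i + v = Q * (2 ^ m + 1) -> 0 < v -> v < x ->
  ~ coset_leader (2 ^ m + 1) x.
Proof.
move=> h hv hvx [hxn H].
have := H (x * 2 ^ (i + m) %% (2 ^ m + 1)) (ex_intro _ (i + m) erefl).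
rewrite expnD mulnA shift (@modE2 _ _ _ _ h); lia.
Qed.

Lemma low d x i : 2 * 2 ^ i <= d -> 16 <= d -> 0 < x -> x < 16 * d -> Pn (16*d*d+1) x i.
Proof.
move=> hT hd hx hxd; have hT1 : 0 < 2 ^ i by rewrite expn_gt0.
move: hT hT1; set T := 2 ^ i => hT hT1.
have h1 : x * (2 * T) <= x * d by apply: leq_mul.
have h2 : x * d <= 16 * d * d by apply: leq_mul; lia.
have h3 : 16 * d <= d * d by apply: leq_mul.
apply: (@P_eq1 _ _ _ 0 (x * T)); rewrite ?hi => //.
- by rewrite leq_pmulr.
- lia.
Qed.

Lemma high d x S i : S * 2 ^ i = 16*d*d -> 2 <= S -> 2 * S <= d -> ~~ odd S -> odd x ->
  16 <= d -> x < 16 * d -> Pn (16*d*d+1) x i.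
Proof.
move=> hST hS hSd hSe hodd hd hxd.
move: hST; set T := 2 ^ i => hST.
have hT : 32 * d <= T.
  have : 32 * d * S <= T * S by rewrite (mulnC T) hST; nia.
  by rewrite leq_pmul2r //; lia.
have hr : odd (x %% S) by rewrite odd_mod // (negbTE hSe).
have hx := divn_eq x S.
have hrS : x %% S < S by rewrite ltn_mod; lia.
move: hr hx hrS; set r := x %% S; set q := x %/ S => hr hx hrS.
have hr1 : 1 <= r by case: (r) hr.
have hxpos : 0 < x by case: (x) hodd.
have hqx : q <= x by rewrite hx; nia.
have hrT : T <= r * T by nia.
have hrT2 : r * T + T <= S * T by rewrite -mulSnr leq_mul2r; lia.
apply: (@P_eq1 _ _ _ q (r * T - q)); rewrite ?hi => //; [|lia|lia].
rewrite hx; nia.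
Qed.

Ltac fin := first [lia | nia].

Lemma mid0 d x i : 2 ^ i = d -> 16 <= d -> 0 < x -> x <= 16 * d - 16 -> Pn (16*d*d+1) x i.
Proof.
move=> hi hd hx hxd; have := leq_mul hxd (leqnn (d + 1)).
have := leq_mul hx (leqnn d) => h1 h2.
apply: (@P_eq1 _ _ _ 0 (x * d)); rewrite ?hi; fin.
Qed.

Lemma mid1a d x i : 2 ^ i = d * 2 -> 16 <= d -> 0 < x -> x <= 8 * d - 5 -> Pn (16*d*d+1) x i.
Proof.
move=> hi hd hx hxd; have := leq_mul hxd (leqnn (2 * d + 1)).
have := leq_mul hx (leqnn d) => h1 h2.
apply: (@P_eq1 _ _ _ 0 (x * (d * 2))); rewrite ?hi; fin.
Qed.

Lemma mid1b d x i : 2 ^ i = d * 2 -> 16 <= d -> 8 * d + 5 <= x -> x <= 14 * d - 3 -> Pn (16*d*d+1) x i.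
Proof.
move=> hi hd hx hxd; have := leq_mul hxd (leqnn (2 * d + 1)).
have := leq_mul hx (leqnn (2 * d - 1)) => h1 h2.
apply: (@P_eq1 _ _ _ 1 (x * (d * 2) - (16*d*d+1))); rewrite ?hi; fin.
Qed.

Lemma mid2a d x i : 2 ^ i = d * 4 -> 16 <= d -> 0 < x -> x <= 4 * d - 1 -> Pn (16*d*d+1) x i.
Proof.
move=> hi hd hx hxd; have := leq_mul hxd (leqnn (4 * d + 1)).
have := leq_mul hx (leqnn d) => h1 h2.
apply: (@P_eq1 _ _ _ 0 (x * (d * 4))); rewrite ?hi; fin.
Qed.

Lemma mid2 d x i q r : 2 ^ i = d * 4 -> 16 <= d -> x = q * (4 * d) + r -> 1 <= q <= 3 ->
  q + 2 <= r -> r <= 4 * d - q - 1 -> (q == 3) ==> (r <= 2 * d - 3) -> Pn (16*d*d+1) x i.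
Proof.
move=> hi hd hx hq hr1 hr2 h3.
have := leq_mul hr1 (leqnn (4 * d - 1)).
have := leq_mul hr2 (leqnn (4 * d + 1)) => h1 h2.
apply: (@P_eq1 _ _ _ q (4 * d * r - q)); rewrite ?hi ?hx; fin.
Qed.

Lemma mid3a d x i : 2 ^ i = d * 8 -> 16 <= d -> odd x -> x < 8 * d -> Pn (16*d*d+1) x i.
Proof.
move=> hi hd hodd hxd.
have hr : odd (x %% (2 * d)) by rewrite odd_mod // oddM.
have hx := divn_eq x (2 * d).
have hrS : x %% (2 * d) < 2 * d by rewrite ltn_mod; lia.
move: hr hx hrS; set r := x %% (2 * d); set q := x %/ (2 * d) => hr hx hrS.
clearbody r q.
have hr1 : 1 <= r by case: (r) hr.
have hq : q <= 3.
  have : q * (2 * d) < 4 * (2 * d) by lia.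
  by rewrite ltn_pmul2r; lia.
have h1 : q * d <= 3 * d by rewrite leq_mul2r hq orbT.
have h2 : d * 1 <= d * r by rewrite leq_mul2l hr1 orbT.
have h3 : 16 * r <= d * r by rewrite leq_mul2r hd orbT.
have h4 : d * (r + 1) <= d * (2 * d) by rewrite leq_mul2l; lia.
apply: (@P_eq1 _ _ _ q (8 * d * r - q)); rewrite ?hi ?hx; lia.
Qed.

Lemma mid3b d x i q r : 2 ^ i = d * 8 -> 16 <= d -> x = q * (2 * d) + r -> 4 <= q <= 6 ->
  3 <= r -> r <= 2 * d - 3 -> Pn (16*d*d+1) x i.
Proof.
move=> hi hd hx hq hr1 hr2.
have h1 : q * d <= 6 * d by rewrite leq_mul2r; lia.
have h2 : d * 3 <= d * r by rewrite leq_mul2l hr1 orbT.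
have h3 : 16 * r <= d * r by rewrite leq_mul2r hd orbT.
have h4 : d * (r + 3) <= d * (2 * d) by rewrite leq_mul2l; lia.
apply: (@P_eq1 _ _ _ q (8 * d * r - q)); rewrite ?hi ?hx; lia.
Qed.

Lemma mid4 d x i : 2 ^ i = d * 16 -> 16 <= d -> ~~ odd d -> odd x -> x < 16 * d -> Pn (16*d*d+1) x i.
Proof.
move=> hi hd hde hodd hxd.
have hr : odd (x %% d) by rewrite odd_mod // (negbTE hde).
have hx := divn_eq x d.
have hrS : x %% d < d by rewrite ltn_mod; lia.
move: hr hx hrS; set r := x %% d; set q := x %/ d => hr hx hrS.
clearbody r q.
have hr1 : 1 <= r by case: (r) hr.
have hq : q <= 15.
  have : q * d < 16 * d by lia.
  by rewrite ltn_pmul2r; lia.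
have h1 : q * d <= 15 * d by rewrite leq_mul2r hq orbT.
have h2 : d * 1 <= d * r by rewrite leq_mul2l hr1 orbT.
have h3 : 16 * r <= d * r by rewrite leq_mul2r hd orbT.
have h4 : d * (r + 1) <= d * d by rewrite leq_mul2l; lia.
apply: (@P_eq1 _ _ _ q (16 * d * r - q)); rewrite ?hi ?hx; lia.
Qed.

Lemma all_i t x : 1 <= t -> odd x -> x < 16 * 2 ^ (4 * t) ->
  let d := 2 ^ (4 * t) in
  Pn (16*d*d+1) x (4 * t) -> Pn (16*d*d+1) x (4 * t + 1) -> Pn (16*d*d+1) x (4 * t + 2) ->
  Pn (16*d*d+1) x (4 * t + 3) -> Pn (16*d*d+1) x (4 * t + 4) ->
  forall i, i < 8 * t + 4 -> Pn (16*d*d+1) x i.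
Proof.
move=> ht hodd hxd d P0 P1 P2 P3 P4 i hi.
have hd : 16 <= d by rewrite /d (_ : 16 = 2 ^ 4) // leq_exp2l //; lia.
have hx0 : 0 < x by case: (x) hodd.
case: (ltnP i (4 * t)) => h1.
  apply: low => //.
  by rewrite /d -expnS leq_exp2l //.
case: (ltnP i (4 * t + 5)) => h2.
  have : i = 4 * t \/ i = 4 * t + 1 \/ i = 4 * t + 2 \/ i = 4 * t + 3 \/ i = 4 * t + 4 by lia.
  by case=> [->|[->|[->|[->|->]]]].
apply: (@high d x (2 ^ (8 * t + 4 - i))) => //.
- rewrite -expnD subnK; last by lia.
  by rewrite /d (_ : 16 = 2 ^ 4) // -!expnD; congr (2 ^ _); lia.
- rewrite (_ : 2 = 2 ^ 1) // leq_exp2l //; lia.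
- by rewrite /d -expnS leq_exp2l //; lia.
- by rewrite oddX /=; apply/eqP; lia.
Qed.

Theorem theorem5p1 (t : nat) (ht : 1 <= t) (x : nat) (hodd : odd x) :
  let m := 8 * t + 4 in
  let n := 2 ^ m + 1 in
  let a := 2 ^ (4 * t + 1) in
  let b := 2 ^ (4 * t + 2) in
  let c := 2 ^ (4 * t + 3) in
  ((1 <= x <= b - 1) -> coset_leader n x) /\
  ((b + 3 <= x <= c - 5) -> coset_leader n x) /\
  ((c + 5 <= x <= c + a - 3) -> coset_leader n x) /\
  ((c + a + 3 <= x <= c + b - 3) -> coset_leader n x) /\
  ((c + b + 5 <= x <= c + b + a - 3) -> coset_leader n x) /\
  ((x = b + 1 \/ (c - 3 <= x <= c + 3) \/ (c + a - 1 <= x <= c + a + 1)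
    \/ (c + b - 1 <= x <= c + b + 3) \/ (c + b + a - 1 <= x <= c + b + a + 1))
   -> ~ coset_leader n x).
Proof.
move=> m n a b c.
set d := 2 ^ (4 * t).
have hd : 16 <= d by rewrite /d (_ : 16 = 2 ^ 4) // leq_exp2l //; lia.
have hde : ~~ odd d by rewrite /d oddX /=; apply/eqP; lia.
have hN : 2 ^ m = 16 * d * d.
  by rewrite /m /d (_ : 16 = 2 ^ 4) // -!expnD; congr (2 ^ _); lia.
have pe : forall e, 2 ^ (4 * t + e) = d * 2 ^ e by move=> e; rewrite expnD.
have ha : a = d * 2 by rewrite /a pe.
have hb : b = d * 4 by rewrite /b pe.
have hc : c = d * 8 by rewrite /c pe.
have hdd : d <= d * d by rewrite leq_pmulr; lia.
have hx0 : 0 < x by case: (x) hodd.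
have L : x <= 14 * d - 3 -> (forall i, i < m -> Pn n x i) -> coset_leader n x.
  move=> hx H; apply: leader_of => //; rewrite ?hN; lia.
have Lall : x <= 14 * d - 3 ->
  Pn n x (4 * t) -> Pn n x (4 * t + 1) -> Pn n x (4 * t + 2) ->
  Pn n x (4 * t + 3) -> Pn n x (4 * t + 4) -> coset_leader n x.
  move=> hx P0 P1 P2 P3 P4; apply: L => //.
  have hn : n = 16 * d * d + 1 by rewrite /n hN.
  rewrite hn in P0 P1 P2 P3 P4 *; apply: all_i => //; lia.
rewrite /n hN; rewrite /n hN in Lall.
have p0 : 2 ^ (4 * t) = d by [].
have p1 : 2 ^ (4 * t + 1) = d * 2 by rewrite pe.
have p2 : 2 ^ (4 * t + 2) = d * 4 by rewrite pe.
have p3 : 2 ^ (4 * t + 3) = d * 8 by rewrite pe.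
have p4 : 2 ^ (4 * t + 4) = d * 16 by rewrite pe.
rewrite ha hb hc; split; [|split; [|split; [|split; [|split]]]].
- move=> hx; apply: Lall; first lia.
  + apply: mid0 p0 _ _ _ => //; lia.
  + apply: mid1a p1 _ _ _ => //; lia.
  + apply: mid2a p2 _ _ _ => //; lia.
  + apply: mid3a p3 _ _ _ => //; lia.
  + apply: mid4 p4 _ _ _ _ => //; lia.
- move=> hx; apply: Lall; first lia.
  + apply: mid0 p0 _ _ _ => //; lia.
  + apply: mid1a p1 _ _ _ => //; lia.
  + apply: (@mid2 d x _ 1 (x - 4 * d)) p2 _ _ _ _ _ _ => //; lia.
  + apply: mid3a p3 _ _ _ => //; lia.
  + apply: mid4 p4 _ _ _ _ => //; lia.
- move=> hx; apply: Lall; first lia.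
  + apply: mid0 p0 _ _ _ => //; lia.
  + apply: mid1b p1 _ _ _ => //; lia.
  + apply: (@mid2 d x _ 2 (x - 8 * d)) p2 _ _ _ _ _ _ => //; lia.
  + apply: (@mid3b d x _ 4 (x - 8 * d)) p3 _ _ _ _ _ => //; lia.
  + apply: mid4 p4 _ _ _ _ => //; lia.
- move=> hx; apply: Lall; first lia.
  + apply: mid0 p0 _ _ _ => //; lia.
  + apply: mid1b p1 _ _ _ => //; lia.
  + apply: (@mid2 d x _ 2 (x - 8 * d)) p2 _ _ _ _ _ _ => //; lia.
  + apply: (@mid3b d x _ 5 (x - 10 * d)) p3 _ _ _ _ _ => //; lia.
  + apply: mid4 p4 _ _ _ _ => //; lia.
- move=> hx; apply: Lall; first lia.
  + apply: mid0 p0 _ _ _ => //; lia.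
  + apply: mid1b p1 _ _ _ => //; lia.
  + apply: (@mid2 d x _ 3 (x - 12 * d)) p2 _ _ _ _ _ _ => //; lia.
  + apply: (@mid3b d x _ 6 (x - 12 * d)) p3 _ _ _ _ _ => //; lia.
  + apply: mid4 p4 _ _ _ _ => //; lia.
- move=> H.
  have hy : x = 2 * x./2 + 1 by rewrite -[x in LHS]odd_double_half hodd; lia.
  have hm : 16 * d * d + 1 = 2 ^ m + 1 by rewrite hN.
  case: H => [hx|[H|[H|[H|H]]]].
  + apply: (@notL1 _ x (4 * t + 2) 1 (4 * d - 1)); rewrite ?p2 ?hx; lia.
  + have : x = 8 * d - 3 \/ x = 8 * d - 1 \/ x = 8 * d + 1 \/ x = 8 * d + 3 by lia.
    case=> [hx|[hx|[hx|hx]]].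
    * rewrite hm; apply: (@notL2 _ x (4 * t + 1) 1 (6 * d + 1)); rewrite -?hm ?p1 ?hx; lia.
    * rewrite hm; apply: (@notL2 _ x (4 * t + 1) 1 (2 * d + 1)); rewrite -?hm ?p1 ?hx; lia.
    * apply: (@notL1 _ x (4 * t + 1) 1 (2 * d - 1)); rewrite ?p1 ?hx; lia.
    * apply: (@notL1 _ x (4 * t + 1) 1 (6 * d - 1)); rewrite ?p1 ?hx; lia.
  + have : x = 10 * d - 1 \/ x = 10 * d + 1 by lia.
    case=> [hx|hx].
    * rewrite hm; apply: (@notL2 _ x (4 * t + 3) 5 (8 * d + 5)); rewrite -?hm ?p3 ?hx; lia.
    * apply: (@notL1 _ x (4 * t + 3) 5 (8 * d - 5)); rewrite ?p3 ?hx; lia.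
  + have : x = 12 * d - 1 \/ x = 12 * d + 1 \/ x = 12 * d + 3 by lia.
    case=> [hx|[hx|hx]].
    * rewrite hm; apply: (@notL2 _ x (4 * t + 2) 3 (4 * d + 3)); rewrite -?hm ?p2 ?hx; lia.
    * apply: (@notL1 _ x (4 * t + 2) 3 (4 * d - 3)); rewrite ?p2 ?hx; lia.
    * apply: (@notL1 _ x (4 * t + 2) 3 (12 * d - 3)); rewrite ?p2 ?hx; lia.
  + have : x = 14 * d - 1 \/ x = 14 * d + 1 by lia.
    case=> [hx|hx].
    * rewrite hm; apply: (@notL2 _ x (4 * t + 3) 7 (8 * d + 7)); rewrite -?hm ?p3 ?hx; lia.
    * apply: (@notL1 _ x (4 * t + 3) 7 (8 * d - 7)); rewrite ?p3 ?hx; lia.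
Qed.
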